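(* Let $G=(G^0,G^1,r,s)$ be a topological graph in which $G^0$ and $G^1$ are compact Hausdorff spaces and $r,s:G^1\to G^0$ are surjective local homeomorphisms. For $m,n\in\mathbb{N}$ let $G^1_{m,n}:=\{e\in G^1:|r(e)G^1|=m\text{ and }|G^1s(e)|=n\}$. Then the sets $G^1_{m,n}$ are compact open, as are $s(G^1_{m,n})$ and $r(G^1_{m,n})$.
   Context: For $v\in G^0$, $G^1v:=s^{-1}(v)$ and $vG^1:=r^{-1}(v)$; $|\cdot|$ denotes cardinality. *)

(* Defs.v *)
From HB Require Import structures.
From mathcomp Require Import all_boot all_order all_algebra.
From mathcomp Require Import all_classical all_reals all_analysis.
Set Implicit Arguments. Unset Strict Implicit. Unset Printing Implicit Defensive.
Import Order.TTheory GRing.Theory Num.Theory.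
Local Open Scope classical_set_scope.

(* f : X -> Y is a local homeomorphism: f is continuous and every point has an
   open neighbourhood U such that f(U) is open and f restricted to U is a
   homeomorphism onto f(U) (injective on U, and open on open subsets of U). *)
Definition local_homeo (X Y : topologicalType) (f : X -> Y) : Prop :=
  continuous f /\
  forall x : X, exists U : set X,
    [/\ open U, U x, open (f @` U), {in U &, injective f} &
        forall V : set X, open V -> V `<=` U -> open (f @` V)].

(* G^1_{m,n} = {e : |r(e)G^1| = m and |G^1 s(e)| = n}, with
   vG^1 = r^{-1}(v) and G^1 v = s^{-1}(v). *)
Definition edges_mn (E V : Type) (r s : E -> V) (m n : nat) : set E :=
  [set e | (card_eq (r @^-1` [set r e]) `I_m) /\
           (card_eq (s @^-1` [set s e]) `I_n)].

(* Main.v *)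
Require Import Defs.
From HB Require Import structures.
From mathcomp Require Import all_boot all_order all_algebra.
From mathcomp Require Import all_classical all_reals all_analysis.
Local Open Scope classical_set_scope.

Definition pt (X : topologicalType) (x0 : X) : Type := X.
HB.instance Definition _ (X : topologicalType) (x0 : X) :=
  Topological.copy (@pt X x0) X.
HB.instance Definition _ (X : topologicalType) (x0 : X) :=
  isPointed.Build (@pt X x0) x0.
Lemma cc (X : topologicalType) (x0 : X) :
  compact [set: X] -> cover_compact [set: X].
Proof.
move=> h; have := @compact_cover (@pt X x0) => e.
have h' : @compact (@pt X x0) setT := h.
rewrite e in h'; exact: h'.
Qed.

Lemma sep_point_list (T : topologicalType) (hT : hausdorff_space T) (a : T)
  (l : seq T) : a \notin l -> exists A B : set T,
  [/\ open A, open B, A a, (forall y, y \in l -> B y) &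
     (forall z, A z -> B z -> False)].
Proof.
elim: l => [|b l IH] H.
  by exists setT, set0; split => //; [exact: openT|exact: open0].
rewrite in_cons negb_or in H; case/andP: H => Hab Hl.
have := hT; rewrite open_hausdorff => hT'.
have [[A1 B1] /= [aA1 bB1] [oA1 oB1 /eqP dAB]] := hT' a b Hab.
have [A2 [B2 [oA2 oB2 aA2 lB2 d2]]] := IH Hl.
exists (A1 `&` A2), (B1 `|` B2); split.
- exact: openI.
- exact: openU.
- by split => //; rewrite -in_setE.
- move=> y; rewrite in_cons => /orP[/eqP ->|yl]; first by left; rewrite -in_setE.
  by right; apply: lB2.
- move=> z [z1 z2] [zb|zb]; last exact: d2 zb.
  have : (A1 `&` B1) z by [].
  by rewrite dAB.
Qed.

Lemma sep_family (T : topologicalType) (hT : hausdorff_space T)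
  (V : T -> set T) (hV : forall x, open (V x) /\ V x x) (l : seq T) :
  exists U : T -> set T,
   (forall x, x \in l -> [/\ open (U x), U x x & U x `<=` V x]) /\
   (forall x y z, x \in l -> y \in l -> x != y -> U x z -> U y z -> False).
Proof.
elim: l => [|a l [U [H1 H2]]]; first by exists V.
have [al|al] := boolP (a \in l).
  exists U; split.
    by move=> x; rewrite in_cons => /orP[/eqP ->|]; apply: H1.
  move=> x y z; rewrite !in_cons => /orP[/eqP ->|xl] /orP[/eqP ->|yl];
    by apply: H2.
have [A [B [oA oB Aa lB dAB]]] := @sep_point_list _ hT a l al.
exists (fun x => if x == a then V a `&` A else U x `&` B); split.
  move=> x; rewrite in_cons => /orP[/eqP ->|xl].
    rewrite eqxx; split; [exact: openI (hV a).1 oA| by split => //; exact: (hV a).2|exact: subIsetl].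
  have xa : x != a by apply: contraNneq al => <-.
  rewrite (negbTE xa); have [h1 h2 h3] := H1 x xl.
  split; [exact: openI| by split => //; exact: lB|by move=> z [/h3]].
move=> x y z; rewrite !in_cons => /orP[/eqP ->|xl] /orP[/eqP ->|yl];
  rewrite ?eqxx //.
- have ya : y != a by apply: contraNneq al => <-.
  by rewrite (negbTE ya) => _ [_ zA] [_ zB]; exact: dAB zA zB.
- have xa : x != a by apply: contraNneq al => <-.
  by rewrite (negbTE xa) => _ [_ zB] [_ zA]; exact: dAB zA zB.
- have xa : x != a by apply: contraNneq al => <-.
  have ya : y != a by apply: contraNneq al => <-.
  rewrite (negbTE xa) (negbTE ya) => xy [z1 _] [z2 _]; exact: H2 xy z1 z2.
Qed.

Lemma lh_open (X Y : topologicalType) (f : X -> Y) (hf : local_homeo f)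
  (O : set X) : open O -> open (f @` O).
Proof.
move=> oO; have [Uf HU] := choice (snd hf).
have -> : f @` O = \bigcup_(x in O) f @` (O `&` Uf x).
  apply/seteqP; split => [y [x Ox <-]|y [x _ [z [Oz _] <-]]]; last by exists z.
  by exists x => //; exists x => //; split => //; have [] := HU x.
apply: bigcup_open => x _; have [H0 _ _ _ H] := HU x.
by apply: H; [exact: openI|].
Qed.

Lemma fiber_loc (X Y : topologicalType) (f : X -> Y) (hXc : compact [set: X])
  (hX : hausdorff_space X) (hY : hausdorff_space Y) (hf : local_homeo f)
  (v : Y) : exists W : set Y, [/\ open W, W v &
    forall w, W w -> card_eq (f @^-1` [set w]) (f @^-1` [set v])].
Proof.
have [hc hU] := hf; have [Uf HU] := choice hU.
set F := f @^-1` [set v].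
have Ffin : finite_set F.
  have [/eqP->|/set0P[x0 _]] := boolP (F == set0); first exact: finite_set0.
  have := @cc X x0 hXc => /(_ X setT Uf) [].
  - by move=> i _; have [] := HU i.
  - by move=> x _; exists x => //; have [] := HU x.
  move=> D' _ cov.
  move: cov; set D := [set` _] => cov.
  apply: (@sub_finite_set _ F (\bigcup_(i in D) (Uf i `&` F))).
    by move=> x Fx; have [i Di Ux] := cov x I; exists i.
  apply: bigcup_finite; first exact: finite_fset.
  move=> i _.
  have [/eqP->|/set0P[x [Ux Fx]]] := boolP (Uf i `&` F == set0).
    exact: finite_set0.
  apply: (@sub_finite_set _ _ [set x]); last exact: finite_set1.
  move=> y [Uy Fy]; have [_ _ _ inj _] := HU i.
  by apply: inj; rewrite ?in_setE //; rewrite Fy Fx.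
have [s Fs] := (finite_seqP F).1 Ffin.
have sF : forall x, x \in s -> F x by move=> x xs; rewrite Fs.
have Fs' : forall x, F x -> x \in s by move=> x; rewrite Fs.
have [U [HU1 HU2]] := @sep_family _ hX Uf
  (fun x => let: And5 a b _ _ _ := HU x in conj a b) s.
have oU : forall x, x \in s -> open (f @` U x).
  move=> x xs; have [h1 _ h3] := HU1 x xs; have [_ _ _ _ H] := HU x.
  exact: H.
exists (~` (\bigcup_(x in [set` s]) ~` (f @` U x)) `&`
        ~` (f @` (~` \bigcup_(x in [set` s]) U x))); split.
- apply: openI; apply: closed_openC.
    apply: closed_bigcup; first by apply/finite_seqP; exists s.
    by move=> x xs; rewrite closedC; apply: oU.
  apply: compact_closed hY _; apply: continuous_compact.
    exact: continuous_subspaceT.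
  apply: (subclosed_compact _ hXc) => //.
  by rewrite closedC; apply: bigcup_open => x xs; have [] := HU1 x xs.
- split.
    move=> [x xs]; apply; exists x; first by have [] := HU1 x xs.
    exact: sF.
  move=> [e nU fe]; apply: nU; exists e; first exact: Fs'.
  by have [] := HU1 e (Fs' e fe).
move=> w [W1 W2].
have ex : forall x, exists e, x \in s -> U x e /\ f e = w.
  move=> x; have [xs|xs] := boolP (x \in s); last by exists x.
  have : (f @` U x) w.
    by move: W1; apply: contra_notP => H; exists x.
  by move=> [e ? ?]; exists e.
have [g Hg] := choice ex.
rewrite card_eq_sym.
have Hb : set_bij F (f @^-1` [set w]) g.
  split.
  - by move=> x Fx; exact: (Hg x (Fs' x Fx)).2.
  - move=> x y; rewrite !in_setE => Fx Fy gxy.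
    apply/eqP/negPn/negP => nxy.
    apply: (HU2 x y (g x) (Fs' x Fx) (Fs' y Fy) nxy (Hg x (Fs' x Fx)).1).
    by rewrite gxy; exact: (Hg y (Fs' y Fy)).1.
  - move=> e fe.
    have : (\bigcup_(x in [set` s]) U x) e.
      by move: W2; apply: contra_notP => ne; exists e.
    move=> [x xs Ue]; exists x; first exact: sF.
    have [_ _ h3] := HU1 x xs; have [_ _ _ inj _] := HU x.
    apply: inj; rewrite ?in_setE; [exact: h3 (Hg x xs).1|exact: h3|].
    by rewrite (Hg x xs).2 fe.
exact: pcard_eq Hb.
Qed.

Lemma open_loc (Y : topologicalType) (A : set Y) :
  (forall x, A x -> exists W, [/\ open W, W x & W `<=` A]) -> open A.
Proof.
move=> H; rewrite openE => x Ax; have [W [oW Wx WA]] := H x Ax.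
by apply: (filterS WA); apply: open_nbhs_nbhs; split.
Qed.

Lemma count_clopen (X Y : topologicalType) (f : X -> Y)
  (hXc : compact [set: X]) (hX : hausdorff_space X)
  (hY : hausdorff_space Y) (hf : local_homeo f) (m : nat) :
  open [set v | card_eq (f @^-1` [set v]) `I_m] /\
  closed [set v | card_eq (f @^-1` [set v]) `I_m].
Proof.
split; last rewrite -openC; apply: open_loc => v Hv;
  have [W [oW Wv HW]] := @fiber_loc X Y f hXc hX hY hf v;
  exists W; split => // w Ww /=.
  exact: card_eq_trans (HW w Ww) Hv.
move=> Hw; apply: Hv => /=.
by apply: card_eq_trans Hw; rewrite card_eq_sym; exact: HW.
Qed.

Theorem mainTheorem10 (G0 G1 : topologicalType) (r s : G1 -> G0)
  (hG0c : compact [set: G0]) (hG0h : hausdorff_space G0)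
  (hG1c : compact [set: G1]) (hG1h : hausdorff_space G1)
  (hr : local_homeo r) (hs : local_homeo s)
  (hrsurj : forall v : G0, exists e : G1, r e = v)
  (hssurj : forall v : G0, exists e : G1, s e = v) :
  forall m n : nat,
    (compact (edges_mn r s m n) /\ open (edges_mn r s m n)) /\
    (compact (s @` edges_mn r s m n) /\ open (s @` edges_mn r s m n)) /\
    (compact (r @` edges_mn r s m n) /\ open (r @` edges_mn r s m n)).
Proof.
move=> m n.
have [oA cA] := @count_clopen G1 G0 r hG1c hG1h hG0h hr m.
have [oB cB] := @count_clopen G1 G0 s hG1c hG1h hG0h hs n.
have Eeq : edges_mn r s m n =
  r @^-1` [set v | card_eq (r @^-1` [set v]) `I_m] `&`
  s @^-1` [set v | card_eq (s @^-1` [set v]) `I_n] by [].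
have oE : open (edges_mn r s m n).
  by rewrite Eeq; apply: openI; apply: open_comp => // x _;
    [exact: hr.1|exact: hs.1].
have cE : closed (edges_mn r s m n).
  by rewrite Eeq; apply: closedI; apply: preimage_closed => // x _;
    [exact: hr.1|exact: hs.1].
have kE : compact (edges_mn r s m n) by exact: subclosed_compact cE hG1c _.
split; [by []|split; split].
- by apply: continuous_compact kE; apply: continuous_subspaceT; exact: hs.1.
- exact: lh_open.
- by apply: continuous_compact kE; apply: continuous_subspaceT; exact: hr.1.
- exact: lh_open.
Qed.
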